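(* Assume the Setting and consider Algorithm 2 with $0<\mu_0<4\sigma(1-\eta)$. (i) If $F(x_n)=y$ for some $n\ge0$, then $x_m=x_n$ for all $m>n$. (ii) If $\xi_{n+1}=\xi_n$ for some $n\ge0$, then $F(x_n)=y$, and $x_m=x_n$ and $\xi_m=\xi_n$ for all $m>n$.
   Context: Setting. Let $X,Y$ be real Hilbert spaces. Let $\mathcal R:X\to(-\infty,\infty]$ be proper, lower semicontinuous and strongly convex with constant $\sigma>0$, i.e. $\mathcal R(t\bar x+(1-t)x)+\sigma t(1-t)\|\bar x-x\|^2\le t\mathcal R(\bar x)+(1-t)\mathcal R(x)$ for all $\bar x,x\in\mathrm{dom}(\mathcal R)$ and $t\in[0,1]$. For $\xi\in\partial\mathcal R(x)$ (subdifferential) the Bregman distance is $D_{\mathcal R}^{\xi}(z,x)=\mathcal R(z)-\mathcal R(x)-\langle\xi,z-x\rangle$. The convex conjugate $\mathcal R^*$ is differentiable with $\|\nabla\mathcal R^*(\bar\xi)-\nabla\mathcal R^*(\xi)\|\le\|\bar\xi-\xi\|/(2\sigma)$, and $\nabla\mathcal R^*(\xi)=\arg\min_{x\in X}\{\mathcal R(x)-\langle\xi,x\rangle\}$ (unique minimizer), with $\xi\in\partial\mathcal R(\nabla\mathcal R^*(\xi))$. Let $F:\mathrm{dom}(F)\subset X\to Y$ and $y\in Y$. Assume: (b) there are $\rho>0$, $x_0\in X$, $\xi_0\in\partial\mathcal R(x_0)$ with $B_{2\rho}(x_0):=\{x:\|x-x_0\|\le 2\rho\}\subset\mathrm{dom}(F)$,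 and $F(x)=y$ has a solution $\bar x$ with $D_{\mathcal R}^{\xi_0}(\bar x,x_0)\le\sigma\rho^2$; (c) $F$ is weakly closed: if $x_n\in\mathrm{dom}(F)$, $x_n\rightharpoonup x$ and $F(x_n)\to v$, then $x\in\mathrm{dom}(F)$ and $F(x)=v$; (d) there are bounded linear operators $L(x):X\to Y$, $x\in B_{2\rho}(x_0)$, with $x\mapsto L(x)$ continuous on $B_{2\rho}(x_0)$, a constant $\eta\in[0,1)$ with $\|F(x)-F(\bar x)-L(\bar x)(x-\bar x)\|\le\eta\|F(x)-F(\bar x)\|$ for all $x,\bar x\in B_{2\rho}(x_0)$, and a constant $L>0$ with $\|L(x)\|\le L$ on $B_{2\rho}(x_0)$. Algorithm 2 (exact data $y$). Parameters: $\beta\in(0,\infty]$, $\mu_0>0$, $\mu_1>0$, and a fixed choice of step-size rule: (constant) $\alpha_n=\mu_0/L^2$, or (adaptive) $\alpha_n=\min\{\mu_0\|r_n\|^2/\|g_n\|^2,\mu_1\}$ if $r_n\ne0$ and $\alpha_n=0$ if $r_n=0$ (with $\mu_0\|r_n\|^2/\|g_n\|^2:=+\infty$ if $g_n=0$). Set $\xi_{-1}=\xi_0$, $x_0=\nabla\mathcal R^*(\xi_0)$. For all $n\ge0$ (no stopping): $r_n:=F(x_n)-y$, $g_n:=L(x_n)^*r_n$, $\alpha_n$ by the chosen rule; $m_n:=\xi_n-\xi_{n-1}$; $\tilde\gamma_0:=0$ and for $n\ge1$, $\tilde\gamma_n:=\langle m_n,x_n-x_{n-1}\rangle-(1-\eta)\alpha_{n-1}\|r_{n-1}\|^2+\beta_{n-1}\tilde\gamma_{n-1}$;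 $\beta_n:=\min\{\max\{0,(\alpha_n\langle g_n,m_n\rangle-2\sigma\tilde\gamma_n)/\|m_n\|^2\},\beta\}$ if $m_n\ne0$ and $\beta_n:=0$ if $m_n=0$; $\xi_{n+1}:=\xi_n-\alpha_ng_n+\beta_nm_n$, $x_{n+1}:=\nabla\mathcal R^*(\xi_{n+1})$. *)

(* Defs.v *)
From Stdlib Require Import Reals.
From Coquelicot Require Import Rbar.
Open Scope R_scope.

Record Hilbert := {
  hcar :> Type;
  hzero : hcar;
  hadd : hcar -> hcar -> hcar;
  hopp : hcar -> hcar;
  hscal : R -> hcar -> hcar;
  hinner : hcar -> hcar -> R;
  hadd_assoc : forall u v w, hadd u (hadd v w) = hadd (hadd u v) w;
  hadd_comm : forall u v, hadd u v = hadd v u;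
  hadd_zero : forall u, hadd u hzero = u;
  hadd_opp : forall u, hadd u (hopp u) = hzero;
  hscal_assoc : forall a b u, hscal a (hscal b u) = hscal (a * b) u;
  hscal_one : forall u, hscal 1 u = u;
  hscal_distr_l : forall a u v, hscal a (hadd u v) = hadd (hscal a u) (hscal a v);
  hscal_distr_r : forall a b u, hscal (a + b) u = hadd (hscal a u) (hscal b u);
  hinner_sym : forall u v, hinner u v = hinner v u;
  hinner_add_l : forall u v w, hinner (hadd u v) w = hinner u w + hinner v w;
  hinner_scal_l : forall a u v, hinner (hscal a u) v = a * hinner u v;
  hinner_pos : forall u, 0 <= hinner u u;
  hinner_def : forall u, hinner u u = 0 -> u = hzero;
  hcomplete : forall u : nat -> hcar,
    (forall eps, 0 < eps -> exists N, forall m n, (N <= m)%nat -> (N <= n)%nat ->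
        sqrt (hinner (hadd (u m) (hopp (u n))) (hadd (u m) (hopp (u n)))) < eps) ->
    exists l, forall eps, 0 < eps -> exists N, forall n, (N <= n)%nat ->
        sqrt (hinner (hadd (u n) (hopp l)) (hadd (u n) (hopp l))) < eps
}.

Arguments hzero {_}.
Arguments hadd {_}.
Arguments hopp {_}.
Arguments hscal {_}.
Arguments hinner {_}.

Definition hsub {H : Hilbert} (u v : H) : H := hadd u (hopp v).
Definition hnorm {H : Hilbert} (u : H) : R := sqrt (hinner u u).

Definition hcvg {H : Hilbert} (u : nat -> H) (l : H) : Prop :=
  forall eps, 0 < eps -> exists N, forall n, (N <= n)%nat -> hnorm (hsub (u n) l) < eps.

Definition hweak_cvg {H : Hilbert} (u : nat -> H) (l : H) : Prop :=
  forall z : H, Un_cv (fun n => hinner (u n) z) (hinner l z).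

Definition hball {H : Hilbert} (x0 : H) (r : R) (x : H) : Prop := hnorm (hsub x x0) <= r.

Definition in_dom {X : Hilbert} (Rf : X -> Rbar) (x : X) : Prop :=
  exists a : R, Rf x = Finite a.

Definition proper_fun {X : Hilbert} (Rf : X -> Rbar) : Prop :=
  (forall x, Rf x <> m_infty) /\ exists x, in_dom Rf x.

Definition lsc_fun {X : Hilbert} (Rf : X -> Rbar) : Prop :=
  forall (x : X) (t : R), Rbar_lt (Finite t) (Rf x) ->
    exists d, 0 < d /\ forall z, hnorm (hsub z x) < d -> Rbar_lt (Finite t) (Rf z).

Definition strongly_convex {X : Hilbert} (Rf : X -> Rbar) (sigma : R) : Prop :=
  forall (xb x : X) (a b t : R), Rf xb = Finite a -> Rf x = Finite b -> 0 <= t <= 1 ->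
    Rbar_le (Rbar_plus (Rf (hadd (hscal t xb) (hscal (1 - t) x)))
                       (Finite (sigma * t * (1 - t) * (hnorm (hsub xb x)) ^ 2)))
            (Finite (t * a + (1 - t) * b)).

Definition subdiff {X : Hilbert} (Rf : X -> Rbar) (x xi : X) : Prop :=
  exists b : R, Rf x = Finite b /\
    forall z, Rbar_le (Finite (b + hinner xi (hsub z x))) (Rf z).

Definition bregman_le {X : Hilbert} (Rf : X -> Rbar) (xi z x : X) (c : R) : Prop :=
  exists a b : R, Rf z = Finite a /\ Rf x = Finite b /\ a - b - hinner xi (hsub z x) <= c.

(* x = grad R^*(xi) = argmin_z { R(z) - <xi, z> } *)
Definition is_gradRstar {X : Hilbert} (Rf : X -> Rbar) (xi x : X) : Prop :=
  in_dom Rf x /\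
  forall z, Rbar_le (Rbar_plus (Rf x) (Finite (- hinner xi x)))
                    (Rbar_plus (Rf z) (Finite (- hinner xi z))).

Inductive step_rule := ConstantStep | AdaptiveStep.

Definition betacap (beta : Rbar) (t : R) : R :=
  match beta with Finite b => Rmin t b | _ => t end.

(* m_n = xi_n - xi_{n-1}, with xi_{-1} = xi_0, i.e. m_0 = 0 *)
Definition mom {X : Hilbert} (xi : nat -> X) (n : nat) : X :=
  match n with O => hzero | S k => hsub (xi (S k)) (xi k) end.

Definition alg2_run {X Y : Hilbert} (Rf : X -> Rbar) (F : X -> Y) (y : Y)
    (Lstar : X -> Y -> X) (sigma eta Lc : R) (beta : Rbar) (mu0 mu1 : R)
    (rule : step_rule) (xi0 : X)
    (xi x : nat -> X) (alpha bet gam : nat -> R) : Prop :=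
  let r := fun n => hsub (F (x n)) y in
  let g := fun n => Lstar (x n) (r n) in
  let m := mom xi in
  xi 0%nat = xi0 /\
  (forall n, is_gradRstar Rf (xi n) (x n)) /\
  (forall n, match rule with
             | ConstantStep => alpha n = mu0 / Lc ^ 2
             | AdaptiveStep =>
                 (r n = hzero -> alpha n = 0) /\
                 (r n <> hzero -> g n = hzero -> alpha n = mu1) /\
                 (r n <> hzero -> g n <> hzero ->
                    alpha n = Rmin (mu0 * (hnorm (r n)) ^ 2 / (hnorm (g n)) ^ 2) mu1)
             end) /\
  gam 0%nat = 0 /\
  (forall n, gam (S n) = hinner (m (S n)) (hsub (x (S n)) (x n))
                         - (1 - eta) * alpha n * (hnorm (r n)) ^ 2
                         + bet n * gam n) /\
  (forall n, (m n = hzero -> bet n = 0) /\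
             (m n <> hzero -> bet n = betacap beta
                (Rmax 0 ((alpha n * hinner (g n) (m n) - 2 * sigma * gam n)
                         / (hnorm (m n)) ^ 2)))) /\
  (forall n, xi (S n) = hadd (hsub (xi n) (hscal (alpha n) (g n)))
                             (hscal (bet n) (m n))).

(* Main.v *)
Require Import Defs.
From Stdlib Require Import Reals Lra Psatz Lia Classical.
From Coquelicot Require Import Rbar.
Open Scope R_scope.

Lemma hinner_zero_l (H : Hilbert) (w : H) : hinner hzero w = 0.
Proof. pose proof (hinner_add_l H hzero hzero w) as E. rewrite hadd_zero in E. lra. Qed.
Lemma hinner_opp_l (H : Hilbert) (u w : H) : hinner (hopp u) w = - hinner u w.
Proof. pose proof (hinner_add_l H u (hopp u) w) as E. rewrite hadd_opp, hinner_zero_l in E. lra. Qed.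
Lemma hinner_add_r (H : Hilbert) (u v w : H) : hinner w (hadd u v) = hinner w u + hinner w v.
Proof. rewrite !(hinner_sym H w). apply hinner_add_l. Qed.
Lemma hinner_opp_r (H : Hilbert) (u w : H) : hinner w (hopp u) = - hinner w u.
Proof. rewrite !(hinner_sym H w). apply hinner_opp_l. Qed.
Lemma hinner_scal_r (H : Hilbert) a (u w : H) : hinner w (hscal a u) = a * hinner w u.
Proof. rewrite !(hinner_sym H w). apply hinner_scal_l. Qed.
Lemma hinner_zero_r (H : Hilbert) (w : H) : hinner w hzero = 0.
Proof. rewrite hinner_sym. apply hinner_zero_l. Qed.
Lemma hinner_sub_l (H : Hilbert) (u v w : H) : hinner (hsub u v) w = hinner u w - hinner v w.
Proof. unfold hsub. rewrite hinner_add_l, hinner_opp_l. lra. Qed.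
Lemma hinner_sub_r (H : Hilbert) (u v w : H) : hinner w (hsub u v) = hinner w u - hinner w v.
Proof. unfold hsub. rewrite hinner_add_r, hinner_opp_r. lra. Qed.

Ltac hexp := repeat (rewrite ?hinner_add_l, ?hinner_add_r, ?hinner_sub_l, ?hinner_sub_r,
  ?hinner_scal_l, ?hinner_scal_r, ?hinner_opp_l, ?hinner_opp_r, ?hinner_zero_l, ?hinner_zero_r).
Ltac hexp_in P := repeat (rewrite ?hinner_add_l, ?hinner_add_r, ?hinner_sub_l, ?hinner_sub_r,
  ?hinner_scal_l, ?hinner_scal_r, ?hinner_opp_l, ?hinner_opp_r, ?hinner_zero_l, ?hinner_zero_r in P).

Lemma hsub_zero_eq (H : Hilbert) (u v : H) : hsub u v = hzero -> u = v.
Proof.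
  unfold hsub; intro E.
  assert (E2 : hadd (hadd u (hopp v)) v = v) by (rewrite E, hadd_comm, hadd_zero; auto).
  rewrite <- hadd_assoc, (hadd_comm H (hopp v)), hadd_opp, hadd_zero in E2. exact E2.
Qed.
Lemma eq_by_inner (H : Hilbert) (u v : H) : (forall w, hinner u w = hinner v w) -> u = v.
Proof.
  intro E. apply hsub_zero_eq, hinner_def. rewrite hinner_sub_l, !E. lra.
Qed.
Lemma inner_self_zero (H : Hilbert) (u : H) : hinner u u <= 0 -> u = hzero.
Proof. intro; apply hinner_def. pose proof (hinner_pos H u). lra. Qed.

Lemma hnorm_nonneg (H : Hilbert) (u : H) : 0 <= hnorm u.
Proof. apply sqrt_pos. Qed.
Lemma hnorm_sq (H : Hilbert) (u : H) : hnorm u ^ 2 = hinner u u.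
Proof. unfold hnorm. simpl. rewrite Rmult_1_r. apply sqrt_sqrt, hinner_pos. Qed.
Lemma hnorm_sq' (H : Hilbert) (u : H) : hnorm u * hnorm u = hinner u u.
Proof. unfold hnorm. apply sqrt_sqrt, hinner_pos. Qed.

Lemma quad (H : Hilbert) (u v : H) t : 2 * t * hinner u v <= t * t * hinner u u + hinner v v.
Proof.
  pose proof (hinner_pos H (hsub (hscal t u) v)) as P. hexp_in P.
  rewrite (hinner_sym H v u) in P. nra.
Qed.

Lemma cauchy_schwarz (H : Hilbert) (u v : H) : hinner u v <= hnorm u * hnorm v.
Proof.
  pose proof (hnorm_nonneg H u) as Pu; pose proof (hnorm_nonneg H v) as Pv.
  pose proof (hnorm_sq' H u) as Su; pose proof (hnorm_sq' H v) as Sv.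
  destruct (Req_dec (hnorm u) 0) as [Zu|Zu].
  { assert (u = hzero) by (apply hinner_def; nra). subst. rewrite hinner_zero_l. nra. }
  destruct (Req_dec (hnorm v) 0) as [Zv|Zv].
  { assert (v = hzero) by (apply hinner_def; nra). subst. rewrite hinner_zero_r. nra. }
  pose proof (quad H u v (hnorm v / hnorm u)) as Q.
  rewrite <- Su, <- Sv in Q.
  assert (Q2 : 2 * (hnorm v / hnorm u) * hinner u v <= 2 * (hnorm v * hnorm v)).
  { replace (2 * (hnorm v * hnorm v)) with
      (hnorm v / hnorm u * (hnorm v / hnorm u) * (hnorm u * hnorm u) + hnorm v * hnorm v)
      by (field; auto). exact Q. }
  assert (Hu : 0 < hnorm u) by lra. assert (Hv : 0 < hnorm v) by lra.
  apply Rmult_le_compat_l with (r := hnorm u / (2 * hnorm v)) in Q2.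
  2: { apply Rlt_le, Rdiv_lt_0_compat; lra. }
  replace (hnorm u / (2 * hnorm v) * (2 * (hnorm v / hnorm u) * hinner u v)) with (hinner u v) in Q2 by (field; lra).
  replace (hnorm u / (2 * hnorm v) * (2 * (hnorm v * hnorm v))) with (hnorm u * hnorm v) in Q2 by (field; lra).
  exact Q2.
Qed.
Lemma cauchy_schwarz_neg (H : Hilbert) (u v : H) : - (hnorm u * hnorm v) <= hinner u v.
Proof.
  pose proof (cauchy_schwarz H u (hopp v)) as C. rewrite hinner_opp_r in C.
  assert (hnorm (hopp v) = hnorm v) as E by (unfold hnorm; hexp; f_equal; ring).
  rewrite E in C. lra.
Qed.

Lemma grad_subdiff (X : Hilbert) (Rf : X -> Rbar) (xi u : X) :
  is_gradRstar Rf xi u -> subdiff Rf u xi.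
Proof.
  intros [[b Hb] Hm]. exists b. split; [exact Hb|]. intro z.
  specialize (Hm z). rewrite Hb in Hm. destruct (Rf z) as [a| |]; simpl in *; auto.
  rewrite hinner_sub_r. lra.
Qed.

Lemma sc_breg (X : Hilbert) (Rf : X -> Rbar) sigma (x z xi : X) a b :
  0 < sigma -> strongly_convex Rf sigma ->
  Rf x = Finite b -> (forall w, Rbar_le (Finite (b + hinner xi (hsub w x))) (Rf w)) ->
  Rf z = Finite a ->
  sigma * hinner (hsub z x) (hsub z x) <= a - b - hinner xi (hsub z x).
Proof.
  intros Hs Hsc Hb Hsub Ha.
  set (N := hinner (hsub z x) (hsub z x)). set (D := a - b - hinner xi (hsub z x)).
  assert (HN : 0 <= N) by apply hinner_pos.
  assert (Ht : forall t, 0 < t < 1 -> sigma * (1 - t) * N <= D).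
  { intros t Ht0.
    pose proof (Hsc z x a b t Ha Hb ltac:(lra)) as C.
    pose proof (Hsub (hadd (hscal t z) (hscal (1 - t) x))) as S.
    rewrite hnorm_sq in C. fold N in C.
    destruct (Rf (hadd (hscal t z) (hscal (1 - t) x))) as [v| |]; simpl in *; try contradiction.
    revert S. hexp. intro S. unfold D. rewrite hinner_sub_r.
    assert (t * (sigma * (1 - t) * N) <= t * (a - b - (hinner xi z - hinner xi x))) by nra.
    apply Rmult_le_reg_l in H; lra. }
  destruct (Rle_dec (sigma * N) D) as [ok|nok]; [exact ok|exfalso].
  set (e := sigma * N - D).
  assert (He : 0 < e) by (unfold e; lra).
  assert (HsN : 0 <= sigma * N) by nra.
  set (t := e / (2 * (e + sigma * N))).
  assert (Htt : 0 < t < 1).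
  { unfold t; split. apply Rdiv_lt_0_compat; lra.
    apply Rmult_lt_reg_r with (r := 2 * (e + sigma * N)); [lra|].
    unfold Rdiv; rewrite Rmult_assoc, Rinv_l; lra. }
  specialize (Ht t Htt).
  assert (E1 : t * (2 * (e + sigma * N)) = e) by (unfold t; field; lra).
  assert (E2 : sigma * (1 - t) * N = sigma * N - t * (sigma * N)) by ring.
  assert (E3 : t * (2 * (e + sigma * N)) = 2 * (t * e) + 2 * (t * (sigma * N))) by ring.
  assert (0 < t * e) by nra.
  unfold e in *. lra.
Qed.

Lemma grad_unique (X : Hilbert) (Rf : X -> Rbar) sigma (x u xi : X) :
  0 < sigma -> strongly_convex Rf sigma ->
  subdiff Rf x xi -> is_gradRstar Rf xi u -> u = x.
Proof.
  intros Hs Hsc [b [Hb Hsub]] [[a Ha] Hm].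
  pose proof (sc_breg X Rf sigma x u xi a b Hs Hsc Hb Hsub Ha) as B.
  specialize (Hm x). rewrite Ha, Hb in Hm. simpl in Hm.
  rewrite (hinner_sub_r X u x xi) in B.
  apply hsub_zero_eq, inner_self_zero.
  pose proof (hinner_pos X (hsub u x)). nra.
Qed.

Lemma norm_le (H : Hilbert) (u : H) c : 0 <= c -> hinner u u <= c * c -> hnorm u <= c.
Proof.
  intros Hc Hu. unfold hnorm. rewrite <- (sqrt_square c Hc). apply sqrt_le_1; auto. apply hinner_pos. nra.
Qed.
Lemma norm_sq_le (H : Hilbert) (u : H) c : 0 <= c -> hnorm u <= c -> hinner u u <= c * c.
Proof.
  intros Hc Hu. rewrite <- hnorm_sq'. pose proof (hnorm_nonneg H u). nra.
Qed.
Lemma hsub_self (H : Hilbert) (u : H) : hsub u u = hzero.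
Proof. apply hadd_opp. Qed.

Theorem mainTheorem6
  (X Y : Hilbert) (Rf : X -> Rbar) (sigma : R)
  (F : X -> Y) (domF : X -> Prop) (y : Y)
  (rho : R) (x0 xi0 xbar : X)
  (Lop : X -> X -> Y) (Lstar : X -> Y -> X) (eta Lc : R)
  (beta : Rbar) (mu0 mu1 : R) (rule : step_rule)
  (xi x : nat -> X) (alpha bet gam : nat -> R)
  (* Setting (a): R proper, lsc, strongly convex with constant sigma > 0 *)
  (Hsigma : 0 < sigma)
  (HRproper : proper_fun Rf) (HRlsc : lsc_fun Rf) (HRsc : strongly_convex Rf sigma)
  (* (b) *)
  (Hrho : 0 < rho) (Hxi0 : subdiff Rf x0 xi0)
  (HdomF : forall z, hball x0 (2 * rho) z -> domF z)
  (Hxbar_dom : domF xbar) (Hxbar : F xbar = y)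
  (Hbreg : bregman_le Rf xi0 xbar x0 (sigma * rho ^ 2))
  (* (c) weak closedness of F *)
  (HFwc : forall (u : nat -> X) (z : X) (v : Y),
      (forall n, domF (u n)) -> hweak_cvg u z -> hcvg (fun n => F (u n)) v ->
      domF z /\ F z = v)
  (* (d) bounded linear operators L(x), their adjoints, continuity, tangential cone, bound *)
  (HLadd : forall z, hball x0 (2 * rho) z ->
      forall h k, Lop z (hadd h k) = hadd (Lop z h) (Lop z k))
  (HLscal : forall z, hball x0 (2 * rho) z ->
      forall a h, Lop z (hscal a h) = hscal a (Lop z h))
  (HLadj : forall z, hball x0 (2 * rho) z ->
      forall h w, hinner (Lop z h) w = hinner h (Lstar z w))
  (HLcont : forall z, hball x0 (2 * rho) z -> forall eps, 0 < eps ->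
      exists d, 0 < d /\ forall z', hball x0 (2 * rho) z' -> hnorm (hsub z' z) < d ->
        forall h, hnorm (hsub (Lop z' h) (Lop z h)) <= eps * hnorm h)
  (Heta : 0 <= eta < 1)
  (Htcc : forall z zb, hball x0 (2 * rho) z -> hball x0 (2 * rho) zb ->
      hnorm (hsub (hsub (F z) (F zb)) (Lop zb (hsub z zb)))
        <= eta * hnorm (hsub (F z) (F zb)))
  (HLc : 0 < Lc)
  (HLbound : forall z, hball x0 (2 * rho) z -> forall h, hnorm (Lop z h) <= Lc * hnorm h)
  (* Algorithm 2 parameters *)
  (Hbeta : Rbar_lt (Finite 0) beta)
  (Hmu0 : 0 < mu0 < 4 * sigma * (1 - eta)) (Hmu1 : 0 < mu1)
  (Hrun : alg2_run Rf F y Lstar sigma eta Lc beta mu0 mu1 rule xi0 xi x alpha bet gam) :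
  (forall n, F (x n) = y -> forall m, (n < m)%nat -> x m = x n) /\
  (forall n, xi (S n) = xi n ->
     F (x n) = y /\ forall m, (n < m)%nat -> x m = x n /\ xi m = xi n).
Proof.
  unfold alg2_run in Hrun; cbv beta zeta in Hrun.
  destruct Hrun as (H0 & Hgrad & Halpha & Hgam0 & Hgam & Hbet & Hupd).
  set (r := fun n => hsub (F (x n)) y).
  set (g := fun n => Lstar (x n) (r n)).
  assert (Halpha' : forall n, match rule with
             | ConstantStep => alpha n = mu0 / Lc ^ 2
             | AdaptiveStep =>
                 (r n = hzero -> alpha n = 0) /\
                 (r n <> hzero -> g n = hzero -> alpha n = mu1) /\
                 (r n <> hzero -> g n <> hzero ->
                    alpha n = Rmin (mu0 * (hnorm (r n)) ^ 2 / (hnorm (g n)) ^ 2) mu1)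
             end) by exact Halpha. clear Halpha; rename Halpha' into Halpha.
  assert (Hgam' : forall n, gam (S n) = hinner (mom xi (S n)) (hsub (x (S n)) (x n))
                         - (1 - eta) * alpha n * (hnorm (r n)) ^ 2
                         + bet n * gam n) by exact Hgam. clear Hgam; rename Hgam' into Hgam.
  assert (Hbet' : forall n, (mom xi n = hzero -> bet n = 0) /\
             (mom xi n <> hzero -> bet n = betacap beta
                (Rmax 0 ((alpha n * hinner (g n) (mom xi n) - 2 * sigma * gam n)
                         / (hnorm (mom xi n)) ^ 2)))) by exact Hbet. clear Hbet; rename Hbet' into Hbet.
  assert (Hupd' : forall n, xi (S n) = hadd (hsub (xi n) (hscal (alpha n) (g n)))
                             (hscal (bet n) (mom xi n))) by exact Hupd. clear Hupd; rename Hupd' into Hupd.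
  set (B := hball x0 (2 * rho)).
  assert (Halpha0 : forall n, 0 <= alpha n).
  { intro n; specialize (Halpha n); destruct rule.
    - rewrite Halpha. apply Rlt_le, Rdiv_lt_0_compat; [lra|]. apply pow_lt; lra.
    - destruct Halpha as (A1 & A2 & A3).
      destruct (Classical_Prop.classic (r n = hzero)) as [E|E]; [rewrite A1; auto; lra|].
      destruct (Classical_Prop.classic (g n = hzero)) as [E'|E']; [rewrite A2; auto; lra|].
      rewrite A3; auto. unfold Rmin; destruct Rle_dec; [|lra].
      rewrite !hnorm_sq. apply Rmult_le_pos; [apply Rmult_le_pos; [lra|apply hinner_pos]|].
      apply Rlt_le, Rinv_0_lt_compat. pose proof (hinner_pos _ (g n)).
      destruct (Rle_lt_or_eq_dec _ _ H); auto. exfalso; apply E', hinner_def; auto. }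
  assert (Hbpos : exists b, 0 < b /\ forall t, betacap beta t <= t /\ (0 <= t -> 0 <= betacap beta t)
                             /\ (0 < betacap beta t -> betacap beta t <= t)).
  { destruct beta as [b| |]; simpl in Hbeta; try contradiction.
    - exists b; split; auto. intro t; simpl. unfold Rmin; destruct Rle_dec; lra.
    - exists 1; split; [lra|]. intro t; simpl; lra. }
  destruct Hbpos as (bb & Hbb & Hcap).
  assert (Hbet0 : forall n, 0 <= bet n).
  { intro n. destruct (Hbet n) as [E1 E2].
    destruct (Classical_Prop.classic (mom xi n = hzero)) as [E|E]; [rewrite E1; auto; lra|].
    rewrite E2; auto. apply Hcap. apply Rmax_l. }
  assert (Hbet1 : forall n, 0 < bet n ->
     bet n * hinner (mom xi n) (mom xi n) <= alpha n * hinner (g n) (mom xi n) - 2 * sigma * gam n).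
  { intros n Hp. destruct (Hbet n) as [E1 E2].
    destruct (Classical_Prop.classic (mom xi n = hzero)) as [E|E]; [rewrite E1 in Hp; auto; lra|].
    assert (Hq : 0 < hinner (mom xi n) (mom xi n)).
    { pose proof (hinner_pos _ (mom xi n)). destruct (Rle_lt_or_eq_dec _ _ H); auto.
      exfalso; apply E, hinner_def; auto. }
    rewrite E2 in *; auto. rewrite hnorm_sq in *.
    set (t := (alpha n * hinner (g n) (mom xi n) - 2 * sigma * gam n) / hinner (mom xi n) (mom xi n)) in *.
    destruct (Hcap (Rmax 0 t)) as (C1 & C2 & C3).
    specialize (C3 Hp).
    assert (Rmax 0 t = t) as Et.
    { unfold Rmax in *; destruct Rle_dec; auto. lra. }
    rewrite Et in C3 |- *.
    apply Rmult_le_compat_r with (r := hinner (mom xi n) (mom xi n)) in C3; [|lra].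
    unfold t in C3 at 2. unfold Rdiv in C3. rewrite Rmult_assoc, Rinv_l in C3 by lra; lra. }
  assert (Hbet2 : forall n, bet n * (bet n * hinner (mom xi n) (mom xi n)
        - 2 * (alpha n * hinner (g n) (mom xi n)) + 4 * sigma * gam n) <= 0).
  { intro n. destruct (Rle_lt_or_eq_dec _ _ (Hbet0 n)) as [P|P].
    - specialize (Hbet1 n P). pose proof (hinner_pos _ (mom xi n)).
      assert (0 <= bet n * hinner (mom xi n) (mom xi n)) by (apply Rmult_le_pos; lra).
      assert (bet n * hinner (mom xi n) (mom xi n)
        - 2 * (alpha n * hinner (g n) (mom xi n)) + 4 * sigma * gam n <= 0) by lra.
      nra.
    - rewrite <- P. lra. }
  assert (Hopp : forall (H : Hilbert) (u : H), hopp u = hscal (-1) u).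
  { intros H u; apply eq_by_inner; intro w; hexp; ring. }
  assert (Hnopp : forall (H : Hilbert) (u : H), hnorm (hopp u) = hnorm u).
  { intros H u; unfold hnorm; f_equal; hexp; ring. }
  assert (Hlin : forall z, B z -> forall a b w,
      hinner (Lop z (hsub a b)) w = hinner (Lop z a) w - hinner (Lop z b) w).
  { intros z Hz a b w. unfold hsub. rewrite HLadd by auto. rewrite Hopp, HLscal by auto.
    hexp. ring. }
  assert (HLstar0 : forall z, B z -> Lstar z hzero = hzero).
  { intros z Hz. apply eq_by_inner; intro w. rewrite hinner_sym, <- HLadj by auto. hexp. reflexivity. }
  assert (Hstarbd : forall z, B z -> forall w, hinner (Lstar z w) (Lstar z w) <= Lc * Lc * hinner w w).
  { intros z Hz w. set (s := Lstar z w).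
    assert (E : hinner s s = hinner (Lop z s) w) by (unfold s; rewrite HLadj; auto).
    pose proof (cauchy_schwarz _ (Lop z s) w) as C.
    pose proof (HLbound z Hz s) as Lb.
    pose proof (hnorm_nonneg _ s). pose proof (hnorm_nonneg _ w). pose proof (hnorm_nonneg _ (Lop z s)).
    rewrite <- !hnorm_sq'. rewrite <- hnorm_sq' in E.
    assert (Hs : hnorm s * hnorm s <= Lc * hnorm s * hnorm w) by nra.
    destruct (Rle_lt_or_eq_dec _ _ H) as [P|P].
    - assert (hnorm s <= Lc * hnorm w) by nra. nra.
    - rewrite <- P. nra. }
  assert (Hag : forall n, B (x n) -> alpha n * hinner (g n) (g n) <= mu0 * hinner (r n) (r n)).
  { intros n Hn. specialize (Halpha n). destruct rule.
    - rewrite Halpha. pose proof (Hstarbd _ Hn (r n)) as S. fold (g n) in S.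
      pose proof (hinner_pos _ (r n)).
      apply Rmult_le_compat_l with (r := mu0 / Lc ^ 2) in S.
      2: { apply Rlt_le, Rdiv_lt_0_compat; [lra|]. apply pow_lt; lra. }
      replace (mu0 / Lc ^ 2 * (Lc * Lc * hinner (r n) (r n))) with (mu0 * hinner (r n) (r n)) in S
        by (field; lra). exact S.
    - destruct Halpha as (A1 & A2 & A3).
      destruct (Classical_Prop.classic (r n = hzero)) as [E|E].
      { rewrite A1 by auto. rewrite E, hinner_zero_l. lra. }
      destruct (Classical_Prop.classic (g n = hzero)) as [E'|E'].
      { rewrite E', hinner_zero_l. pose proof (hinner_pos _ (r n)). nra. }
      rewrite A3 by auto. rewrite !hnorm_sq.
      assert (Pg : 0 < hinner (g n) (g n)).
      { pose proof (hinner_pos _ (g n)). destruct (Rle_lt_or_eq_dec _ _ H); auto.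
        exfalso; apply E', hinner_def; auto. }
      eapply Rle_trans. apply Rmult_le_compat_r; [lra|apply Rmin_l].
      right. field. lra. }
  assert (Hapos : forall n, r n <> hzero -> 0 < alpha n).
  { intros n E. specialize (Halpha n). destruct rule.
    - rewrite Halpha. apply Rdiv_lt_0_compat; [lra|]. apply pow_lt; lra.
    - destruct Halpha as (A1 & A2 & A3).
      destruct (Classical_Prop.classic (g n = hzero)) as [E'|E']; [rewrite A2; auto|].
      rewrite A3 by auto. rewrite !hnorm_sq.
      assert (Pg : 0 < hinner (g n) (g n)).
      { pose proof (hinner_pos _ (g n)). destruct (Rle_lt_or_eq_dec _ _ H); auto.
        exfalso; apply E', hinner_def; auto. }
      assert (Pr : 0 < hinner (r n) (r n)).
      { pose proof (hinner_pos _ (r n)). destruct (Rle_lt_or_eq_dec _ _ H); auto.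
        exfalso; apply E, hinner_def; auto. }
      unfold Rmin; destruct Rle_dec; auto.
      apply Rdiv_lt_0_compat; nra. }
  assert (Htcc' : forall n xh, B (x n) -> B xh -> F xh = y ->
      (1 - eta) * hinner (r n) (r n) <= hinner (g n) (hsub (x n) xh)).
  { intros n xh Hn Hh Hy.
    pose proof (Htcc xh (x n) Hh Hn) as T. rewrite Hy in T.
    assert (Ey : hsub y (F (x n)) = hopp (r n)).
    { apply eq_by_inner; intro w. unfold r. hexp. ring. }
    rewrite Ey, Hnopp in T.
    set (e := hsub (hopp (r n)) (Lop (x n) (hsub xh (x n)))) in T.
    assert (Id : hinner (g n) (hsub (x n) xh) = hinner (r n) (r n) + hinner (r n) e).
    { unfold g. rewrite hinner_sym, <- HLadj by auto. fold (r n).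
      unfold e. rewrite (hinner_sub_r _ (hopp (r n))), hinner_opp_r.
      rewrite (hinner_sym _ (r n) (Lop (x n) (hsub xh (x n)))).
      rewrite !Hlin by auto. ring. }
    rewrite Id. pose proof (cauchy_schwarz_neg _ (r n) e).
    pose proof (hnorm_nonneg _ (r n)). pose proof (hnorm_sq' _ (r n)).
    assert (hnorm (r n) * hnorm e <= hnorm (r n) * (eta * hnorm (r n))) by (apply Rmult_le_compat_l; auto).
    nra. }
  set (Ex := fun xh k => hinner (mom xi k) (hsub (x k) xh)).
  set (Dl := fun xh k => real (Rf xh) - real (Rf (x k)) - hinner (xi k) (hsub xh (x k))).
  assert (HM : forall k w, hinner (mom xi (S k)) w = - alpha k * hinner (g k) w + bet k * hinner (mom xi k) w).
  { intros k w. change (mom xi (S k)) with (hsub (xi (S k)) (xi k)). rewrite Hupd. hexp. ring. }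
  assert (HM' : forall k w, hinner (mom xi (S k)) w = hinner (xi (S k)) w - hinner (xi k) w).
  { intros k w. change (mom xi (S k)) with (hsub (xi (S k)) (xi k)). hexp. ring. }
  assert (Hstep : forall xh k, F xh = y -> B xh -> in_dom Rf xh -> B (x k) -> Ex xh k <= gam k ->
      Ex xh (S k) <= gam (S k) /\ Dl xh (S k) <= Dl xh k).
  { intros xh k Hy Hh [c Hc] Hk HEk.
    pose proof (Htcc' k xh Hk Hh Hy) as T.
    assert (HE : Ex xh (S k) = hinner (mom xi (S k)) (hsub (x (S k)) (x k))
                     + hinner (mom xi (S k)) (hsub (x k) xh)) by (unfold Ex; hexp; ring).
    assert (HE2 : hinner (mom xi (S k)) (hsub (x k) xh) = - alpha k * hinner (g k) (hsub (x k) xh) + bet k * Ex xh k)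
      by (rewrite HM; reflexivity).
    pose proof (Halpha0 k) as A0. pose proof (Hbet0 k) as B0.
    assert (P1 : alpha k * ((1 - eta) * hinner (r k) (r k)) <= alpha k * hinner (g k) (hsub (x k) xh))
      by (apply Rmult_le_compat_l; auto).
    assert (P2 : bet k * Ex xh k <= bet k * gam k) by (apply Rmult_le_compat_l; auto).
    assert (HG : gam (S k) = hinner (mom xi (S k)) (hsub (x (S k)) (x k))
                   - alpha k * ((1 - eta) * hinner (r k) (r k)) + bet k * gam k)
      by (rewrite Hgam, hnorm_sq; ring).
    split; [lra|].
    destruct (proj1 (Hgrad k)) as [ak Hak].
    destruct (proj1 (Hgrad (S k))) as [ak1 Hak1].
    destruct (grad_subdiff _ _ _ _ (Hgrad k)) as [b0 [Hb0 Hs0]].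
    rewrite Hak in Hb0; injection Hb0 as <-.
    set (d := hsub (x (S k)) (x k)) in *.
    pose proof (sc_breg _ Rf sigma (x k) (x (S k)) (xi k) ak1 ak Hsigma HRsc Hak Hs0 Hak1) as SB.
    fold d in SB.
    assert (ID : Dl xh (S k) - Dl xh k = - (ak1 - ak - hinner (xi k) d) + hinner (mom xi (S k)) d
                   + hinner (mom xi (S k)) (hsub (x k) xh)).
    { unfold Dl, d. rewrite Hak, Hak1, Hc. rewrite !HM'. simpl. hexp. ring. }
    set (M := mom xi (S k)) in *.
    pose proof (quad _ d M (2 * sigma)) as Q. rewrite (hinner_sym _ d M) in Q.
    assert (MM : hinner M M = alpha k * alpha k * hinner (g k) (g k)
                 - 2 * (alpha k * bet k) * hinner (g k) (mom xi k)
                 + bet k * bet k * hinner (mom xi k) (mom xi k)).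
    { unfold M. rewrite HM. rewrite (hinner_sym _ (g k)), (hinner_sym _ (mom xi k)), !HM.
      rewrite (hinner_sym _ (mom xi k) (g k)). ring. }
    pose proof (Hbet2 k) as BB. pose proof (Hag k Hk) as AG.
    pose proof (hinner_pos _ (r k)) as RR.
    assert (AA : alpha k * (alpha k * hinner (g k) (g k)) <= alpha k * (mu0 * hinner (r k) (r k)))
      by (apply Rmult_le_compat_l; auto).
    assert (AB : alpha k * (mu0 * hinner (r k) (r k)) <= alpha k * (4 * sigma * (1 - eta) * hinner (r k) (r k))).
    { apply Rmult_le_compat_l; auto. apply Rmult_le_compat_r; lra. }
    assert (4 * sigma * (Dl xh (S k) - Dl xh k) <= 0).
    { rewrite ID, HE2. nra. }
    nra. }
  assert (Hx0 : x 0%nat = x0).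
  { apply (grad_unique _ Rf sigma x0 (x 0%nat) xi0 Hsigma HRsc Hxi0). rewrite <- H0. apply Hgrad. }
  assert (Hdl_lb : forall xh k, in_dom Rf xh -> sigma * hinner (hsub xh (x k)) (hsub xh (x k)) <= Dl xh k).
  { intros xh k [c Hc]. destruct (grad_subdiff _ _ _ _ (Hgrad k)) as [b0 [Hb0 Hs0]].
    pose proof (sc_breg _ Rf sigma (x k) xh (xi k) c b0 Hsigma HRsc Hb0 Hs0 Hc).
    unfold Dl. rewrite Hc, Hb0. simpl. lra. }
  destruct Hbreg as (ab & bb0 & Hab & Hbx0 & Hbr).
  assert (Hdbar : in_dom Rf xbar) by (exists ab; auto).
  assert (Hxb : hinner (hsub xbar x0) (hsub xbar x0) <= rho * rho).
  { destruct Hxi0 as [b0 [Hb0 Hs0]].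
    pose proof (sc_breg _ Rf sigma x0 xbar xi0 ab b0 Hsigma HRsc Hb0 Hs0 Hab).
    rewrite Hbx0 in Hb0; injection Hb0 as <-.
    assert (Q : sigma * hinner (hsub xbar x0) (hsub xbar x0) <= sigma * (rho * rho)) by (simpl in Hbr; lra).
    apply Rmult_le_reg_l in Q; auto. }
  assert (Hbf : forall z, hinner (hsub xbar z) (hsub xbar z) <= rho * rho -> B z).
  { intros z Hz. unfold B, hball. apply norm_le; [lra|].
    pose proof (hinner_pos _ (hadd (hsub xbar x0) (hsub xbar z))) as P.
    revert P Hz Hxb. hexp. intros P Hz Hxb.
    rewrite (hinner_sym _ x0 xbar), (hinner_sym _ z xbar), (hinner_sym _ x0 z) in *. nra. }
  assert (Bxbar : B xbar) by (apply Hbf; rewrite hsub_self, hinner_zero_l; nra).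
  assert (Inv : forall k, B (x k) /\ Ex xbar k <= gam k /\ Dl xbar k <= sigma * rho ^ 2).
  { induction k as [|k IH].
    - split; [|split].
      + rewrite Hx0. apply Hbf. exact Hxb.
      + unfold Ex. simpl. rewrite hinner_zero_l, Hgam0. lra.
      + unfold Dl. rewrite Hx0, H0, Hab, Hbx0. simpl. exact Hbr.
    - destruct IH as (I1 & I2 & I3).
      destruct (Hstep xbar k Hxbar Bxbar Hdbar I1 I2) as [S1 S2].
      split; [|split; [exact S1|lra]].
      apply Hbf. pose proof (Hdl_lb xbar (S k) Hdbar).
      assert (Q : sigma * hinner (hsub xbar (x (S k))) (hsub xbar (x (S k))) <= sigma * (rho * rho)) by (simpl in *; lra).
      apply Rmult_le_reg_l in Q; auto. }
  split.
  - intros n Hn m Hm.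
    assert (Hdn : in_dom Rf (x n)) by apply (proj1 (Hgrad n)).
    assert (HE : forall k, Ex (x n) k <= gam k).
    { induction k as [|k IH].
      - unfold Ex. simpl. rewrite hinner_zero_l, Hgam0. lra.
      - apply (Hstep (x n) k Hn (proj1 (Inv n)) Hdn (proj1 (Inv k)) IH). }
    assert (HD : forall j, Dl (x n) (n + j)%nat <= Dl (x n) n).
    { induction j as [|j IH]. rewrite Nat.add_0_r; lra.
      rewrite Nat.add_succ_r.
      pose proof (Hstep (x n) (n + j)%nat Hn (proj1 (Inv n)) Hdn (proj1 (Inv (n+j)%nat)) (HE _)). lra. }
    assert (HD0 : Dl (x n) n = 0) by (unfold Dl; rewrite hsub_self, hinner_zero_r; ring).
    replace m with (n + (m - n))%nat by lia.
    pose proof (HD (m - n)%nat). pose proof (Hdl_lb (x n) (n + (m - n))%nat Hdn).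
    symmetry. apply hsub_zero_eq, inner_self_zero.
    assert (Q : sigma * hinner (hsub (x n) (x (n + (m - n))%nat)) (hsub (x n) (x (n + (m - n))%nat)) <= sigma * 0) by lra.
    apply Rmult_le_reg_l in Q; auto.
  - intros n Hxi.
    assert (M0 : forall w, hinner (mom xi (S n)) w = 0).
    { intro w. change (mom xi (S n)) with (hsub (xi (S n)) (xi n)). rewrite Hxi, hsub_self. apply hinner_zero_l. }
    destruct (Inv n) as (I1 & I2 & I3).
    assert (Fx : F (x n) = y).
    { pose proof (HM n (hsub (x n) xbar)) as E1. rewrite M0 in E1.
      pose proof (HM n (mom xi n)) as E2. rewrite M0 in E2.
      pose proof (Htcc' n xbar I1 Bxbar Hxbar) as T.
      pose proof (Halpha0 n). pose proof (Hbet0 n).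
      assert (BG : bet n * gam n <= 0).
      { destruct (Rle_lt_or_eq_dec _ _ (Hbet0 n)) as [P|P].
        - pose proof (Hbet1 n P). assert (sigma * gam n <= 0) by lra. assert (gam n <= 0) by nra. nra.
        - rewrite <- P; lra. }
      assert (BE : bet n * Ex xbar n <= bet n * gam n) by (apply Rmult_le_compat_l; auto).
      assert (AT : alpha n * ((1 - eta) * hinner (r n) (r n)) <= alpha n * hinner (g n) (hsub (x n) xbar))
        by (apply Rmult_le_compat_l; auto).
      unfold Ex in BE.
      apply hsub_zero_eq.
      destruct (Classical_Prop.classic (r n = hzero)) as [Z|Z]; [exact Z|exfalso].
      pose proof (Hapos n Z).
      assert (Pr : 0 < hinner (r n) (r n)).
      { pose proof (hinner_pos _ (r n)) as Q. destruct (Rle_lt_or_eq_dec _ _ Q); auto.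
        exfalso; apply Z, hinner_def; auto. }
      assert (0 < alpha n * ((1 - eta) * hinner (r n) (r n))) by (apply Rmult_lt_0_compat; nra).
      lra. }
    assert (C : forall j, xi (S (n + j)) = xi n /\ xi (n + j)%nat = xi n).
    { induction j as [|j [IH1 IH2]].
      - rewrite Nat.add_0_r. split; auto.
      - rewrite Nat.add_succ_r. split; [|exact IH1].
        set (k := S (n + j)) in *.
        assert (Xk : x k = x n).
        { apply (grad_unique _ Rf sigma (x n) (x k) (xi n) Hsigma HRsc).
          apply grad_subdiff, Hgrad. rewrite <- IH1. apply Hgrad. }
        assert (Mk : mom xi k = hzero).
        { change (mom xi k) with (hsub (xi k) (xi (n + j)%nat)).
          rewrite IH1, IH2. apply hsub_self. }
        assert (Gk : g k = hzero).
        { unfold g, r. rewrite Xk, Fx, hsub_self. apply HLstar0; auto. }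
        rewrite Hupd, Mk, Gk, IH1. apply eq_by_inner; intro w. hexp. ring. }
    split; [exact Fx|]. intros m Hm.
    replace m with (S (n + (m - n - 1)))%nat by lia.
    destruct (C (m - n - 1)%nat) as [C1 _].
    split; [|exact C1].
    apply (grad_unique _ Rf sigma (x n) _ (xi n) Hsigma HRsc).
    apply grad_subdiff, Hgrad. rewrite <- C1. apply Hgrad.
Qed.
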